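(* Let $n\ge 1$, let $x_1,\dots,x_n$ be distinct integers each greater than $1$, and let $D=\{1,0,x_1,\dots,x_n\}$. If $(T,s)$ is an optimal signed tree realizing $D$ and $uv$ is the unique edge of $T$ with $s(uv)=-$, then $\deg(u)=\deg(v)=2$.
   Context: A signed tree is a pair $(T,s)$ where $T$ is a finite tree and $s:E(T)\to\{+,-\}$. The signed degree $sdeg(v)$ of a vertex is the number of incident positive edges minus the number of incident negative edges. $(T,s)$ realizes $D$ if $D=\{sdeg(v):v\in V(T)\}$. $\sigma(D)=\min\{|V(T)|: \text{some signed tree }(T,s)\text{ realizes }D\}$, and a signed tree $(T,s)$ realizing $D$ is optimal if $|V(T)|=\sigma(D)$. $\deg$ denotes the ordinary degree in $T$. *)

(* Defs.v *)
From mathcomp Require Import all_boot all_order all_algebra.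
Set Implicit Arguments. Unset Strict Implicit. Unset Printing Implicit Defensive.
Import GRing.Theory Num.Theory.

(* A finite simple graph on the vertex set 'I_m is a symmetric irreflexive
   relation e. *)
Definition is_tree (m : nat) (e : rel 'I_m) : Prop :=
  [/\ 0 < m,
      (forall u v, e u v = e v u),
      (forall u, ~~ e u u),
      (forall u v, connect e u v) &
      (forall c : seq 'I_m, uniq c -> 2 < size c -> ~~ cycle e c)].

(* A signed tree: the sign s : rel 'I_m (true = +, false = -) is only
   meaningful on edges, and must be a function of the unordered edge. *)
Definition signed_tree (m : nat) (e s : rel 'I_m) : Prop :=
  is_tree e /\ (forall u v, e u v -> s u v = s v u).

Definition deg (m : nat) (e : rel 'I_m) (v : 'I_m) : nat := #|[set w | e v w]|.

Definition sdeg (m : nat) (e s : rel 'I_m) (v : 'I_m) : int :=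
  (#|[set w | e v w && s v w]|%:Z - #|[set w | e v w && ~~ s v w]|%:Z)%R.

Definition realizes (D : pred int) (m : nat) (e s : rel 'I_m) : Prop :=
  forall d : int, D d <-> exists v : 'I_m, sdeg e s v = d.

Definition optimal (D : pred int) (m : nat) (e s : rel 'I_m) : Prop :=
  [/\ signed_tree e s, realizes D e s &
      forall (m' : nat) (e' s' : rel 'I_m'),
        signed_tree e' s' -> realizes D e' s' -> m <= m'].

(* Main.v *)
Require Import Defs.
From mathcomp Require Import all_boot all_order all_algebra.
From mathcomp Require Import zify.
Set Implicit Arguments. Unset Strict Implicit. Unset Printing Implicit Defensive.
Import GRing.Theory Num.Theory.

Section Forest.
Variable m : nat.
Variable e : rel 'I_m.
Hypothesis esym : forall u v, e u v = e v u.
Hypothesis eirr : forall u, ~~ e u u.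
Hypothesis eacyc : forall c : seq 'I_m, uniq c -> 2 < size c -> ~~ cycle e c.

Definition degA (A : {set 'I_m}) w := #|[set y in A | e w y]|.

Lemma extend_path (A : {set 'I_m}) (x : 'I_m) (p : seq 'I_m) :
  (forall w, w \in A -> 2 <= degA A w) ->
  x \in A -> all (mem A) p -> uniq (x :: p) -> path e x p ->
  exists y, [/\ y \in A, uniq (y :: x :: p) & e y x].
Proof.
move=> hdeg xA pA pu pp.
have hx := hdeg x xA.
case: p pA pu pp => [|p0 p'] pA pu pp.
  have : 0 < degA A x by apply: leq_trans hx.
  rewrite /degA card_gt0 => /set0Pn [y]; rewrite inE => /andP [yA exy].
  exists y; split => //; last by rewrite esym.
  rewrite /= inE andbT.
  by apply/eqP => yx; move: exy; rewrite yx (negbTE (eirr x)).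
have : 0 < #|[set y in A | e x y] :\ p0|.
  move: hx; rewrite /degA (cardsD1 p0) => h.
  by case: (_ \in _) h => /= h; [rewrite add1n ltnS in h | rewrite add0n in h; apply: ltnW].
rewrite card_gt0 => /set0Pn [y]; rewrite !inE => /andP [yp0 /andP [yA exy]].
have yx : y != x by apply/eqP => yx; move: exy; rewrite yx (negbTE (eirr x)).
case yin: (y \in p').
  exfalso.
  case/splitPr: yin pu pp => p1 p2 pu pp.
  have := eacyc (c := x :: p0 :: rcons p1 y).
  have uc : uniq (x :: p0 :: rcons p1 y).
    by move: pu; rewrite -cat_rcons -!cat_cons cat_uniq => /andP [].
  have sc : 2 < size (x :: p0 :: rcons p1 y) by rewrite /= size_rcons.
  move=> /(_ uc sc); apply/negP/negPn.
  rewrite /cycle rcons_path /= last_rcons.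
  rewrite (esym y x) exy andbT.
  by move: pp; rewrite -cat_rcons -!cat_cons cat_path => /andP [].
exists y; split => //; last by rewrite esym.
rewrite /= in pu *.
by rewrite pu andbT !inE yin orbF negb_or yx yp0.
Qed.

Lemma low_vertex (A : {set 'I_m}) : A != set0 ->
  exists2 w, w \in A & degA A w <= 1.
Proof.
move=> /set0Pn [x0 x0A].
case: (boolP [exists w in A, degA A w <= 1]) => [/exists_inP [w ? ?]|]; first by exists w.
rewrite negb_exists_in => /forall_inP hall.
have hdeg : forall w, w \in A -> 2 <= degA A w.
  by move=> w wA; have := hall w wA; rewrite -ltnNge.
have : forall k, exists x p, [/\ x \in A, all (mem A) p, uniq (x :: p), path e x p & size p = k].
  elim=> [|k [x [p [xA pA pu pp sp]]]].
    by exists x0, [::]; split.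
  have [y [yA yu eyx]] := extend_path hdeg xA pA pu pp.
  exists y, (x :: p); split => //=.
    by rewrite xA pA.
  by rewrite eyx pp.
  by rewrite sp.
move=> /(_ m) [x [p [_ _ pu _ sp]]].
have := max_card (mem (x :: p)).
by rewrite (card_uniqP pu) card_ord /= sp ltnn.
Qed.

Lemma forest_sum (A : {set 'I_m}) : A != set0 ->
  \sum_(w in A) degA A w + 2 <= 2 * #|A|.
Proof.
move: {2}#|A| (erefl #|A|) => k; elim: k A => [|k IH] A hk hA.
  by move: hA; rewrite -cards_eq0 hk.
have [w wA wdeg] := low_vertex hA.
set B := A :\ w.
have hB : #|B| = k by move: hk; rewrite (cardsD1 w) wA add1n => -[].
rewrite (big_setD1 w wA) /=.
have h1 : forall y, y \in B -> degA A y = degA B y + e y w.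
  move=> y yB; rewrite /degA (cardsD1 w [set z in A | e y z]) addnC inE wA /=.
  congr (_ + _); apply: eq_card => z; rewrite !inE andbA; done.
rewrite (eq_bigr _ h1) big_split /=.
have h2 : \sum_(i in B) (e i w : nat) = degA A w.
  rewrite -big_mkcondr /= sum1_card /degA; apply: eq_card => z.
  rewrite -topredE /= !inE esym; case: (z =P w) => [->|]; first by rewrite (negbTE (eirr w)) !andbF.
  by move=> /eqP zw.
rewrite h2.
case: (B =P set0) => [B0|/eqP BnO].
  have : degA A w <= #|B| by rewrite -h2 -sum1_card; apply: leq_sum => i _; case: (e i w).
  rewrite B0 cards0 leqn0 => /eqP ->.
  rewrite big_set0 hk -hB B0 cards0; done.
have := IH B hB BnO; rewrite hk -hB; move: wdeg.
move=> ha hb; move: (degA A w) (\sum_(i in B) degA B i) #|B| ha hb => a b c; lia.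
Qed.

End Forest.

Section ParentTree.
Variable ps : seq nat.
Hypothesis hps : forall k, k < size ps -> nth 0 ps k <= k.
Local Notation N := (size ps).+1.

Definition pe : rel 'I_N := fun a b =>
  ((0 < a) && (nth 0 ps a.-1 == b)) || ((0 < b) && (nth 0 ps b.-1 == a)).

Lemma par_lt (a : 'I_N) : 0 < a -> nth 0 ps a.-1 < a.
Proof.
move=> a0; have := hps (k := a.-1).
have : a.-1 < size ps by have := ltn_ord a; lia.
move=> h /(_ h); lia.
Qed.

Lemma pe_sym a b : pe a b = pe b a.
Proof. by rewrite /pe orbC. Qed.

Lemma pe_lt a b : pe a b -> b < a -> (0 < a) && (nth 0 ps a.-1 == b).
Proof.
case/orP => // /andP [b0 /eqP h] ba.
have := par_lt b0; rewrite h; lia.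
Qed.

Lemma pe_irr a : ~~ pe a a.
Proof.
apply/negP => /orP; case => /andP [a0 /eqP h]; have := par_lt a0; rewrite h ltnn //.
Qed.

Lemma pe_tree : is_tree pe.
Proof.
have conn0 : forall a : 'I_N, connect pe a ord0.
  move=> a; have : (a : nat) <= a by [].
  move: {2}(a : nat) => k; elim: k a => [|k IH] a ha.
    have -> : a = ord0 by apply: val_inj => /=; lia.
    exact: connect0.
  case: (posnP a) => a0.
    have -> : a = ord0 by apply: val_inj => /=; lia.
    exact: connect0.
  have pl := par_lt a0.
  have pN : nth 0 ps a.-1 < N by apply: ltn_trans pl _.
  apply: (connect_trans (y := Ordinal pN)).
    by apply: connect1; rewrite /pe a0 /= eqxx.
  apply: IH => /=; lia.
split.
- by [].
- exact: pe_sym.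
- exact: pe_irr.
- move=> a b; apply: (connect_trans (y := ord0)); first exact: conn0.
  by rewrite (sym_connect_sym pe_sym); exact: conn0.
move=> c uc sc; apply/negP => cc.
have [x0 x0c] : exists x0, x0 \in c by case: c sc {uc cc} => // a c' _; exists a; rewrite inE eqxx.
have [x xc xmax] := @arg_maxnP _ x0 (fun i => i \in c) val x0c.
case: (rot_to xc) => i c' hrot.
have uc' : uniq (x :: c') by rewrite -hrot rot_uniq.
have cc' : cycle pe (x :: c') by rewrite -hrot rot_cycle.
have sc' : 2 < size (x :: c') by rewrite -hrot size_rot.
have memc : forall y, y \in c' -> y < x.
  move=> y yc; have yc0 : y \in c by rewrite -(mem_rot i) hrot inE yc orbT.
  have : (y : nat) <= x := xmax y yc0. rewrite leq_eqVlt => /orP [/eqP h|//].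
  have yx : y = x by apply: val_inj.
  by move: uc'; rewrite /= -yx yc.
case: c' hrot uc' cc' sc' memc => [|r0 c''] // hrot uc' cc' sc' memc.
case/lastP: c'' hrot uc' cc' sc' memc => [|q z] // hrot uc' cc' sc' memc.
move: cc'; rewrite /cycle /= rcons_path last_rcons => /and3P [exr _ ezx].
have h1 := pe_lt exr (memc r0 (mem_head _ _)).
have zin : z \in r0 :: rcons q z by rewrite inE mem_rcons mem_head orbT.
have h2 := pe_lt (etrans (pe_sym x z) ezx) (memc z zin).
move: h1 h2 => /andP [_ /eqP h1] /andP [_ /eqP h2].
have rz : r0 = z by apply: val_inj => /=; rewrite -h1 -h2.
by move: uc'; rewrite /= rz mem_rcons mem_head /= andbF.
Qed.

Lemma pe_deg (w : 'I_N) : deg pe w = (0 < w) + count_mem (val w) ps.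
Proof.
rewrite /deg -sum1_card big_mkcond /=.
have -> : \sum_(i < N) (if i \in [set y | pe w y] then 1 else 0) =
   \sum_(i < N) (((0 < w) && (nth 0 ps w.-1 == i)) : nat) +
   \sum_(i < N) (((0 < i) && (nth 0 ps i.-1 == w)) : nat).
  rewrite -big_split /=; apply: eq_bigr => i _; rewrite inE /pe.
  case: (boolP ((0 < w) && (nth 0 ps w.-1 == i))) => [/andP [w0 /eqP h]|] /=.
    have := par_lt w0; rewrite h => iw.
    case: (boolP ((0 < i) && (nth 0 ps i.-1 == w))) => [/andP [i0 /eqP h']|] //=.
    by have := par_lt i0; rewrite h'; lia.
  by case: ((0 < i) && _).
congr (_ + _).
  case: (posnP w) => w0 /=.
    by rewrite big1 // => i _; rewrite w0.
  have pN : nth 0 ps w.-1 < N by apply: ltn_trans (par_lt w0) _.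
  rewrite (bigD1 (Ordinal pN)) //= eqxx big1 // => i /eqP hi.
  case: eqP => // h; exfalso; apply: hi; exact: val_inj.
rewrite big_ord_recl /= add0n -sum1_count (big_nth 0) big_mkord /=.
rewrite [RHS]big_mkcond; apply: eq_bigr => i _; rewrite add0n; by case: (_ == _).
Qed.

End ParentTree.

Lemma deg_split m (e s : rel 'I_m) w :
  deg e w = #|[set y | e w y && s w y]| + #|[set y | e w y && ~~ s w y]|.
Proof.
rewrite /deg -(cardsID [set y | s w y] [set y | e w y]); congr (_ + _);
  apply: eq_card => y; rewrite !inE //; by rewrite andbC.
Qed.

Section Constr.
Variable n : nat.
Variable X : 'I_n -> nat.
Hypothesis hn : 0 < n.
Hypothesis hX : forall i, 2 <= X i.

Definition rest := flatten [seq nseq (X i - 2) (i + 3) | i <- enum 'I_n].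
Definition cps := iota 0 (n + 3) ++ rest.

Lemma rest_lt t : t \in rest -> t < n + 3.
Proof.
case/flattenP => s /mapP [i _ ->]; rewrite mem_nseq => /andP [_ /eqP ->].
have := ltn_ord i; lia.
Qed.

Lemma cps_ok k : k < size cps -> nth 0 cps k <= k.
Proof.
move=> hk; rewrite nth_cat size_iota; case: ifP => h.
  by rewrite nth_iota.
case: (ltnP (k - (n + 3)) (size rest)) => h2.
  move/negbT: h; rewrite -leqNgt => h; have := rest_lt (mem_nth 0 h2); move: (nth 0 rest _) => t; lia.
by rewrite nth_default.
Qed.

Lemma size_rest : size rest = \sum_(i < n) (X i - 2).
Proof.
rewrite /rest size_flatten /shape -map_comp sumnE big_map big_enum /=.
by apply: eq_bigr => i _; rewrite size_nseq.
Qed.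

Lemma count_rest w : count_mem w rest = \sum_(i < n) (i + 3 == w) * (X i - 2).
Proof.
rewrite /rest count_flatten -map_comp sumnE big_map big_enum /=.
by apply: eq_bigr => i _; rewrite count_nseq.
Qed.

Local Notation N := (size cps).+1.
Definition ce : rel 'I_N := @pe cps.
Definition cs : rel 'I_N := fun a b =>
  ~~ (((a : nat) == 1) && ((b : nat) == 2) || ((a : nat) == 2) && ((b : nat) == 1)).

Lemma size_cps : size cps = n + 3 + \sum_(i < n) (X i - 2).
Proof. by rewrite size_cat size_iota size_rest. Qed.

Lemma ce_deg (w : 'I_N) : deg ce w =
  (0 < w) + (w < n + 3) + \sum_(i < n) (i + 3 == w) * (X i - 2).
Proof.
rewrite /ce pe_deg; last exact: cps_ok.
rewrite count_cat count_uniq_mem ?iota_uniq // mem_iota add0n count_rest addnA.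
done.
Qed.

Lemma sum_zero (w : nat) : (w < 3) || (n + 3 <= w) ->
  \sum_(i < n) (i + 3 == w) * (X i - 2) = 0.
Proof.
move=> h; rewrite big1 // => i _.
case: eqP => // hi; have := ltn_ord i; move: h; rewrite -hi; lia.
Qed.

Lemma sum_one (i0 : 'I_n) : \sum_(i < n) (i + 3 == i0 + 3) * (X i - 2) = X i0 - 2.
Proof.
rewrite (bigD1 i0) //= eqxx mul1n big1 ?addn0 // => i hi.
case: eqP => // h; exfalso; move/negP: hi; apply; apply/eqP/val_inj => /=; lia.
Qed.

Lemma cneg_card (w : 'I_N) :
  #|[set y | ce w y && ~~ cs w y]| = ((w : nat) == 1) || ((w : nat) == 2).
Proof.
have N3 : 3 < N by rewrite size_cps; lia.
case: (boolP (((w : nat) == 1) || ((w : nat) == 2))) => hw.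
  have [t ht] : exists t : 'I_N, [set y | ce w y && ~~ cs w y] = [set t].
    case/orP: hw => /eqP hw.
      have t2 : 2 < N by lia.
      exists (Ordinal t2); apply/setP => y; rewrite !inE /cs negbK hw /=.
      case: (y =P Ordinal t2) => [->|hy] /=.
        rewrite /ce /pe /= hw /= andbT; apply/orP; right.
        rewrite nth_cat size_iota ifT ?nth_iota //; lia.
      rewrite orbF; apply/negbTE; apply/negP => /andP [_ /eqP h].
      by apply: hy; apply: val_inj.
    have t1 : 1 < N by lia.
    exists (Ordinal t1); apply/setP => y; rewrite !inE /cs negbK hw /=.
    case: (y =P Ordinal t1) => [->|hy] /=.
      rewrite /ce /pe /= hw /= andbT; apply/orP; left.
      rewrite nth_cat size_iota ifT ?nth_iota //; lia.
    apply/negbTE; apply/negP => /andP [_ /eqP h].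
    by apply: hy; apply: val_inj.
  by rewrite ht cards1.
apply/eqP; rewrite cards_eq0; apply/eqP/setP => y; rewrite !inE /cs negbK.
by move: hw; rewrite negb_or => /andP [/negbTE -> /negbTE ->]; rewrite !andbF.
Qed.

Lemma c_sdeg (w : 'I_N) : sdeg ce cs w =
  if ((w : nat) == 1) || ((w : nat) == 2) then (Posz (deg ce w) - 2)%R else Posz (deg ce w).
Proof.
rewrite /sdeg (deg_split ce cs w) cneg_card.
move: #|[set w0 | _]| (((w : nat) == 1) || ((w : nat) == 2)) => a b.
case: b => /=; lia.
Qed.

Definition Dc (d : int) : bool :=
  d \in (1%R :: 0%R :: [seq Posz (X i) | i <- enum 'I_n]).

Lemma c_realizes : realizes Dc ce cs.
Proof.
have N3 : n + 3 < N by rewrite size_cps; lia.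
move=> d; split.
  rewrite /Dc !inE => /orP [/eqP ->|/orP [/eqP ->|/mapP [i _ ->]]].
  - exists ord0; rewrite c_sdeg /= ce_deg sum_zero //=.
    have -> : 0 < n + 3 by lia.
    done.
  - have t1 : 1 < N by lia.
    exists (Ordinal t1); rewrite c_sdeg /= ce_deg sum_zero //=.
    have -> : 1 < n + 3 by lia.
    done.
  - have ti : i + 3 < N by have := ltn_ord i; lia.
    exists (Ordinal ti); rewrite c_sdeg /=.
    have -> : (i + 3 == 1) || (i + 3 == 2) = false by lia.
    rewrite ce_deg /= sum_one.
    have -> : i + 3 < n + 3 by have := ltn_ord i; lia.
    have := hX i; move: (X i) => a ha; congr Posz; lia.
case=> w <-; rewrite /Dc c_sdeg ce_deg !inE.
case: (boolP (((w : nat) == 1) || ((w : nat) == 2))) => hw.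
  rewrite sum_zero; last by case/orP: hw => /eqP ->.
  have -> : 0 < w by case/orP: hw => /eqP ->.
  have -> : w < n + 3 by case/orP: hw => /eqP ->; lia.
  by rewrite orbT.
case: (posnP w) => w0.
  rewrite w0 sum_zero //=; have -> : 0 < n + 3 by lia.
  by [].

case: (ltnP w (n + 3)) => wn; last first.
  by rewrite sum_zero ?wn ?orbT //= addn0 eqxx.
have w3 : 3 <= w by move: hw w0; lia.
have wi : w - 3 < n by lia.
have -> : (w : nat) = Ordinal wi + 3 by rewrite /=; lia.
rewrite sum_one; apply/orP; right; apply/orP; right; apply/mapP.
exists (Ordinal wi); first by rewrite mem_enum.
have := hX (Ordinal wi); move: (X _) => a ha; congr Posz; lia.
Qed.

Lemma c_tree : signed_tree ce cs.
Proof.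
split; first exact: pe_tree cps_ok.
move=> u v _; rewrite /cs; congr negb.
by case: (_ == 1); case: (_ == 2); case: (_ == 1); case: (_ == 2).
Qed.

End Constr.

Lemma construct n (X : 'I_n -> nat) : 0 < n -> (forall i, 2 <= X i) ->
  exists m (e s : rel 'I_m), [/\ signed_tree e s, realizes (Dc X) e s &
     m = n + 4 + \sum_(i < n) (X i - 2)].
Proof.
move=> hn hX; exists (size (cps X)).+1, (@ce n X), (@cs n X); split.
- exact: c_tree.
- exact: c_realizes.
- rewrite size_cps; lia.
Qed.

Lemma sdeg_split m (e s : rel 'I_m) w :
  sdeg e s w = (Posz (deg e w) - Posz #|[set y | e w y && ~~ s w y]|
                  - Posz #|[set y | e w y && ~~ s w y]|)%R.
Proof.
rewrite /sdeg (deg_split e s w).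
move: #|[set y | e w y && s w y]| #|[set y | e w y && ~~ s w y]| => a b; lia.
Qed.

Lemma sdeg_le m (e s : rel 'I_m) w : (sdeg e s w <= Posz (deg e w))%R.
Proof.
rewrite sdeg_split.
move: (deg e w) #|[set y | e w y && ~~ s w y]| => a b; lia.
Qed.

Lemma sum_sub_le m (A : {set 'I_m}) (P : pred 'I_m) (F : 'I_m -> nat) :
  (forall w, w \in A -> P w) -> \sum_(w in A) F w <= \sum_(w | P w) F w.
Proof.
move=> h; rewrite [X in X <= _]big_mkcond [X in _ <= X]big_mkcond /=.
apply: leq_sum => w _; case: ifP => // /h ->; done.
Qed.

Section Core.
Variables (m : nat) (e s : rel 'I_m) (n : nat) (X : 'I_n -> nat) (u v : 'I_m).
Hypothesis htree : is_tree e.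
Hypothesis hD : forall w, Dc X (sdeg e s w).
Hypothesis hxw : forall i, exists w, sdeg e s w = Posz (X i).
Hypothesis Xinj : injective X.
Hypothesis hX2 : forall i, 2 <= X i.
Hypothesis hm : m <= n + 4 + \sum_(i < n) (X i - 2).
Hypothesis huv : e u v.
Hypothesis hneg : ~~ s u v.
Hypothesis hssym : forall a b, e a b -> s a b = s b a.
Hypothesis huniq : forall a b : 'I_m, e a b -> ~~ s a b ->
            ((a == u) && (b == v)) || ((a == v) && (b == u)).

Let esym : forall a b, e a b = e b a. Proof. by case: htree. Qed.
Let eirr : forall a, ~~ e a a. Proof. by case: htree. Qed.
Let econn : forall a b, connect e a b. Proof. by case: htree. Qed.
Let eacyc : forall c : seq 'I_m, uniq c -> 2 < size c -> ~~ cycle e c.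
Proof. by case: htree. Qed.

Let uv : u != v.
Proof. by apply/eqP => h; move: huv; rewrite h (negbTE (eirr v)). Qed.

Lemma neg_u : #|[set y | e u y && ~~ s u y]| = 1.
Proof.
have -> : [set y | e u y && ~~ s u y] = [set v]; last by rewrite cards1.
apply/setP => y; rewrite !inE; apply/idP/idP.
  move=> /andP [h1 h2]; have := huniq h1 h2; rewrite eqxx /= (negbTE uv) /=.
  by rewrite orbF.
by move/eqP ->; rewrite huv hneg.
Qed.

Lemma neg_v : #|[set y | e v y && ~~ s v y]| = 1.
Proof.
have -> : [set y | e v y && ~~ s v y] = [set u]; last by rewrite cards1.
apply/setP => y; rewrite !inE; apply/idP/idP.
  move=> /andP [h1 h2]; have := huniq h1 h2; rewrite eqxx /= eq_sym (negbTE uv) /=.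
  by [].
by move/eqP ->; rewrite esym huv -hssym // hneg.
Qed.

Lemma neg_other w : w != u -> w != v -> #|[set y | e w y && ~~ s w y]| = 0.
Proof.
move=> wu wv; apply/eqP; rewrite cards_eq0; apply/eqP/setP => y; rewrite !inE.
apply/negP => /andP [h1 h2]; have := huniq h1 h2.
by rewrite (negbTE wu) (negbTE wv).
Qed.

Lemma deg_pos w : 0 < deg e w.
Proof.
have [t [tw ht]] : exists t, t != w /\ connect e w t.
  case: (eqVneq w u) => [->|wu]; first by exists v; rewrite eq_sym uv.
  by exists u; rewrite eq_sym wu.
case/connectP: ht => p pp hl.
case: p pp hl => [|y p] /=; first by move=> _ h; move: tw; rewrite h eqxx.
move=> /andP [ewy _] _; rewrite /deg card_gt0; apply/set0Pn; exists y; rewrite inE //.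
Qed.

Lemma Dc_ge0 d : Dc X d -> (0 <= d)%R.
Proof.
rewrite /Dc !inE => /orP [/eqP ->|/orP [/eqP ->|/mapP [i _ ->]]] //.
Qed.

Lemma core : deg e u = 2 -> deg e v = 2.
Proof.
move=> du; apply/eqP; apply/negPn/negP => dv.
have sv : sdeg e s v = (Posz (deg e v) - 2)%R by rewrite sdeg_split neg_v; lia.
have su : sdeg e s u = 0%R by rewrite sdeg_split neg_u du.
have dv3 : 3 <= deg e v.
  have := Dc_ge0 (hD v); rewrite sv; move: dv; move: (deg e v) => a; lia.
have hf := forest_sum esym eirr eacyc (A := [set: 'I_m]).
have hm0 : [set: 'I_m] != set0 by apply/set0Pn; exists u; rewrite inE.
have {hf} hf := hf hm0.
rewrite cardsT card_ord in hf.
have hdeg : forall w, degA e [set: 'I_m] w = deg e w.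
  by move=> w; rewrite /degA /deg; apply: eq_card => y; rewrite !inE.
rewrite (eq_bigl (fun w => true)) in hf; last by move=> w; rewrite inE.
rewrite (eq_bigr _ (fun w _ => hdeg w)) in hf.
pose c w := deg e w - 1.
have hsum : \sum_(w < m) deg e w = \sum_(w < m) c w + m.
  have h1 : \sum_(w < m) (1 : nat) = m by rewrite sum1_card card_ord.
  rewrite -[X in _ = _ + X]h1 -big_split /=; apply: eq_bigr => w _.
  have := deg_pos w; rewrite /c; lia.
rewrite hsum in hf.
pose wv i := odflt u [pick w | sdeg e s w == Posz (X i)].
have hwv : forall i, sdeg e s (wv i) = Posz (X i).
  move=> i; rewrite /wv; case: pickP => [w /eqP //|hn].
  by have [w hw] := hxw i; move: (hn w); rewrite hw eqxx.
have wvinj : injective wv.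
  move=> i j h; apply: Xinj; have := hwv i; rewrite h hwv => -[] //.
pose W := wv @: [set: 'I_n].
have uW : u \notin W.
  apply/imsetP => -[i _ hi]; have := hwv i; rewrite -hi su => h.
  by have := hX2 i; move: h; move: (X i) => a; lia.
have cwv : forall i, X i - 1 <= c (wv i).
  move=> i; have := sdeg_le e s (wv i); rewrite hwv /c; move: (X i) (deg e _) => a b; lia.
have sumW : \sum_(w in W) c w = \sum_(i < n) c (wv i).
  rewrite big_imset /=; last by move=> i j _ _; apply: wvinj.
  by apply: eq_bigl => i; rewrite inE.
have hX1 : \sum_(i < n) (X i - 1) = \sum_(i < n) (X i - 2) + n.
  have h1 : \sum_(i < n) (1 : nat) = n by rewrite sum1_card card_ord.
  rewrite -[X in _ = _ + X]h1 -big_split /=; apply: eq_bigr => i _.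
  have := hX2 i; move: (X i) => a; lia.
have hT : \sum_(i < n) (X i - 1) + 2 <= \sum_(w in v |: W) c w.
  case: (boolP (v \in W)) => vW.
    have -> : v |: W = W by apply/setUidPr; rewrite sub1set.
    rewrite sumW; case/imsetP: vW => j _ hj.
    rewrite (bigD1 j) //= [X in _ <= X](bigD1 j) //= -hj.
    have cv : c v = X j + 1.
      have := hwv j; rewrite -hj sv /c; move: (X j) (deg e v) => a b; lia.
    rewrite cv.
    have : \sum_(i < n | i != j) (X i - 1) <= \sum_(i < n | i != j) c (wv i).
      by apply: leq_sum => i _; apply: cwv.
    have := hX2 j; move: (\sum_(i < n | i != j) (X i - 1)) (\sum_(i < n | i != j) c (wv i)) (X j) => a b d; lia.
  rewrite big_setU1 //= sumW.
  have : \sum_(i < n) (X i - 1) <= \sum_(i < n) c (wv i) by apply: leq_sum => i _; apply: cwv.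
  have : 2 <= c v by rewrite /c; lia.
  move: (\sum_(i < n) (X i - 1)) (\sum_(i < n) c (wv i)) (c v) => a b d; lia.
have hU : c u + \sum_(w in v |: W) c w <= \sum_(w < m) c w.
  rewrite [X in _ <= X](bigD1 u) //= leq_add2l; apply: sum_sub_le => w.
  rewrite !inE => /orP [/eqP ->|wW]; first by rewrite eq_sym.
  by apply/eqP => h; move: uW; rewrite -h wW.
have cu : c u = 1 by rewrite /c du.
move: hf hm hT hU hX1; rewrite cu.
move: (\sum_(w < m) c w) (\sum_(w in v |: W) c w) (\sum_(i < n) (X i - 1)) (\sum_(i < n) (X i - 2)) => a b d f.
lia.
Qed.

End Core.

Unset Implicit Arguments.
Import Order.TTheory.

Theorem mainTheorem11 (n : nat) (x : 'I_n -> int)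
  (hn : 1 <= n) (hinj : injective x) (hx : forall i, (1 < x i)%R)
  (m : nat) (e s : rel 'I_m)
  (hopt : optimal (fun d : int => (d \in (1%R :: 0%R :: [seq x i | i <- enum 'I_n]))) e s)
  (u v : 'I_m) (huv : e u v) (hneg : ~~ s u v)
  (huniq : forall a b : 'I_m, e a b -> ~~ s a b ->
            ((a == u) && (b == v)) || ((a == v) && (b == u))) :
  deg e u = 2 /\ deg e v = 2.
Proof.
case: hopt => [[htree hssym] hreal hmin].
pose X i := `|x i|%N.
have xX : forall i, x i = Posz (X i).
  by move=> i; rewrite /X abszE ger0_norm //; apply: ltW; apply: lt_trans (hx i).
have hX2 : forall i, 2 <= X i.
  by move=> i; have := hx i; rewrite xX; move: (X i) => a; lia.
have Xinj : injective X.
  by move=> i j h; apply: hinj; rewrite !xX h.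
have hDeq : forall d, (d \in (1%R :: 0%R :: [seq x i | i <- enum 'I_n])) = Dc X d.
  by move=> d; rewrite /Dc (eq_map xX).
have hm : m <= n + 4 + \sum_(i < n) (X i - 2).
  have [m' [e' [s' [h1 h2 <-]]]] := construct hn hX2.
  apply: (hmin m' e' s' h1) => d; rewrite hDeq; exact: h2.
have hD : forall w, Dc X (sdeg e s w).
  by move=> w; rewrite -hDeq; apply/(hreal (sdeg e s w)); exists w.
have hxw : forall i, exists w, sdeg e s w = Posz (X i).
  move=> i; apply/(hreal (Posz (X i))); rewrite hDeq /Dc !inE; apply/orP; right; apply/orP; right.
  by apply/mapP; exists i; rewrite ?mem_enum.
have [w0 hw0] : exists w, sdeg e s w = 0%R.
  by apply/(hreal 0%R); rewrite !inE eqxx orbT.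
have huv' : e v u by case: htree => _ hs _ _ _; rewrite hs.
have hneg' : ~~ s v u by rewrite -hssym.
have huniq' : forall a b : 'I_m, e a b -> ~~ s a b ->
            ((a == v) && (b == u)) || ((a == u) && (b == v)).
  by move=> a b h1 h2; rewrite orbC; apply: huniq.
have c1 := core htree hD hxw Xinj hX2 hm huv hneg hssym huniq.
have c2 := core htree hD hxw Xinj hX2 hm huv' hneg' hssym huniq'.
case: (eqVneq w0 u) => [hu|wu].
  have du : deg e u = 2.
    move: hw0; rewrite hu sdeg_split (neg_u htree huv hneg huniq).
    move: (deg e u) => a; lia.
  by split => //; apply: c1.
case: (eqVneq w0 v) => [hv|wv].
  have dv : deg e v = 2.
    move: hw0; rewrite hv sdeg_split (neg_v htree huv hneg hssym huniq).
    move: (deg e v) => a; lia.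
  by split => //; apply: c2.
exfalso; move: hw0; rewrite sdeg_split (neg_other huniq wu wv).
have := deg_pos htree huv w0; move: (deg e w0) => a; lia.
Qed.
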